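(* Let $x\in\mathcal X$. If $T(x)\ge 1-\alpha$, then $\mathcal U_x(\mu)\ge 0$ for all $\mu\ge 0$. Otherwise, $\mu\mapsto\mathcal U_x(\mu)$ is decreasing on $[0,\infty)$.
   Context: Let $(X,Y)\sim P_{XY}$ on $\mathcal X\times\mathcal Y$, $\alpha\in(0,1)$, $\mathcal I$ a finite collection of subsets of $\mathcal Y$, $w:\mathcal I\to(0,B)$ a bounded positive weight. For $C\in\mathcal I$ let $p_C(x)=\mathbb P(Y\in C\mid X=x)$, $\ell_{x,C}(\mu)=w(C)p_C(x)+\mu(p_C(x)-(1-\alpha))$ for $\mu\ge0$, $\mathcal U_x(\mu)=\max_{C\in\mathcal I}\ell_{x,C}(\mu)$, and $T(x)=\max_{C\in\mathcal I}p_C(x)$. *)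

(* Defs.v *)
From HB Require Import structures.
From mathcomp Require Import all_boot all_order all_algebra.
From mathcomp Require Import all_classical all_reals ereal measure probability.
Set Implicit Arguments. Unset Strict Implicit. Unset Printing Implicit Defensive.
Import Order.TTheory GRing.Theory Num.Theory.
Local Open Scope ring_scope.
Local Open Scope classical_set_scope.

(* The conditional law of Y given X = x is given by the Markov kernel K:
   p_C(x) = P(Y \in C | X = x) = K x C. *)
Definition pC (R : realType) (dX dY : measure_display)
  (X : measurableType dX) (Y : measurableType dY)
  (K : X -> probability Y R) (C : set Y) (x : X) : R := fine (K x C).

Definition ell (R : realType) (alpha wC pCx mu : R) : R :=
  wC * pCx + mu * (pCx - (1 - alpha)).

(* U_x(mu) = max_{C in I} l_{x,C}(mu), I a nonempty finite index type
   (i0 witnesses nonemptiness; the max does not depend on it). *)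
Definition Ux (R : realType) (dX dY : measure_display)
  (X : measurableType dX) (Y : measurableType dY)
  (K : X -> probability Y R) (I : finType) (i0 : I) (S : I -> set Y)
  (w : I -> R) (alpha : R) (x : X) (mu : R) : R :=
  \big[Num.max/ell alpha (w i0) (pC K (S i0) x) mu]_(i : I)
     ell alpha (w i) (pC K (S i) x) mu.

Definition Tx (R : realType) (dX dY : measure_display)
  (X : measurableType dX) (Y : measurableType dY)
  (K : X -> probability Y R) (I : finType) (i0 : I) (S : I -> set Y)
  (x : X) : R :=
  \big[Num.max/pC K (S i0) x]_(i : I) pC K (S i) x.

(* Main.v *)
Require Import Defs.
From HB Require Import structures.
From mathcomp Require Import all_boot all_order all_algebra.
From mathcomp Require Import all_classical all_reals ereal measure probability.
Import Order.TTheory GRing.Theory Num.Theory.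
Local Open Scope ring_scope.
Local Open Scope classical_set_scope.

Lemma bigmax_ge {R : realType} {I : finType} (i0 : I) (F : I -> R) i :
  F i <= \big[Num.max/F i0]_(j : I) F j.
Proof.
by rewrite (bigD1 i) //= le_max lexx.
Qed.

Lemma bigmax_attained {R : realType} {I : finType} (i0 : I) (F : I -> R) :
  exists j, \big[Num.max/F i0]_(j : I) F j = F j.
Proof.
apply: (big_ind (fun v => exists j, v = F j)); first by exists i0.
- move=> a b [j1 ->] [j2 ->]; case: (leP (F j1) (F j2)) => h.
  + by exists j2.
  + by exists j1.
- by move=> j _; exists j.
Qed.

Theorem lemma2 (R : realType) (dX dY : measure_display)
  (X : measurableType dX) (Y : measurableType dY)
  (K : X -> probability Y R) (alpha : R) (halpha : 0 < alpha < 1)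
  (I : finType) (i0 : I) (S : I -> set Y) (hS : forall i, measurable (S i))
  (B : R) (w : I -> R) (hw : forall i, 0 < w i < B) (x : X) :
  (1 - alpha <= Tx K i0 S x ->
     forall mu : R, 0 <= mu -> 0 <= Ux K i0 S w alpha x mu) /\
  (Tx K i0 S x < 1 - alpha ->
     forall mu1 mu2 : R, 0 <= mu1 -> mu1 < mu2 ->
       Ux K i0 S w alpha x mu2 < Ux K i0 S w alpha x mu1).
Proof.
split.
- rewrite /Tx; have [j ->] := bigmax_attained i0 (fun i => pC K (S i) x).
  move=> hj mu hmu.
  apply: le_trans (bigmax_ge _ (fun i => ell alpha (w i) (pC K (S i) x) mu) j).
  rewrite /ell; apply: addr_ge0.
  + apply: mulr_ge0; first by case/andP: (hw j) => /ltW.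
    by rewrite /pC fine_ge0 // measure_ge0.
  + by apply: mulr_ge0 => //; rewrite subr_ge0.
- move=> hT mu1 mu2 _ hmu.
  rewrite /Ux; have [j ->] := bigmax_attained i0
    (fun i => ell alpha (w i) (pC K (S i) x) mu2).
  apply: lt_le_trans (bigmax_ge _ (fun i => ell alpha (w i) (pC K (S i) x) mu1) j).
  have hp : pC K (S j) x < 1 - alpha.
    by apply: le_lt_trans hT; exact: (bigmax_ge _ (fun i => pC K (S i) x) j).
  rewrite /ell ltrD2l; rewrite -subr_gt0 -mulrBl.
  have h1 : mu1 - mu2 < 0 by rewrite subr_lt0.
  move: hp; rewrite -subr_lt0 => h2.
  by rewrite (nmulr_rgt0 _ h1).
Qed.
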